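(* Let $(\mathbf{F},\Delta)$ be a poset comonoid and $(\mathbf{F},\Box)$ a poset monoid on the same poset species which form an adjoint pair with $\Delta\dashv\Box$. Then the vector space monoid $(\mathbf{k}\mathbf{F},\Box)$ is isomorphic to the dual monoid $(\mathbf{k}\mathbf{F}^*,\Delta^* )$, via the isomorphism sending each basis element $x\in\mathbf{F}[I]$ to $\omega_x^*$, where $\{\omega_x^*\}_{x\in\mathbf{F}[I]}$ is the basis of $\mathbf{k}\mathbf{F}[I]^*$ dual to the inverted basis $\{\omega_x\}_{x\in\mathbf{F}[I]}$ of $\mathbf{k}\mathbf{F}[I]$.
   Context: $\mathbf{k}$ is a field of characteristic $0$. A (connected) poset species $\mathbf{F}$ assigns to each finite set $I$ a locally finite poset $\mathbf{F}[I]$, with $\mathbf{F}[\emptyset]$ a singleton $\{1\}$, and to each bijection $f:I\to J$ an order-preserving bijection $\mathbf{F}[f]$, functorially. A poset monoid $(\mathbf{F},\Box)$: order-preserving maps $\Box_{S,T}:\mathbf{F}[S]\times\mathbf{F}[T]\to\mathbf{F}[S\sqcup T]$ for disjoint finite $S,T$, natural in bijections, associative, unital with unit $1$. A poset comonoid $(\mathbf{F},\Delta)$: order-preserving maps $\Delta_{S,T}:\mathbf{F}[S\sqcup T]\to\mathbf{F}[S]\times\mathbf{F}[T]$, natural, coassociative, counital ($\Delta_{I,\emptyset}(x)=(x,1)$, $\Delta_{\emptyset,I}(x)=(1,x)$). Adjoint pair $\Delta\dashv\Box$: $\Delta_{S,T}(x)\le(y,z)\iff x\le\Box_{S,T}(y,z)$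 for all $x,y,z$ (product order). The linearization $\mathbf{k}\mathbf{F}$ has $\mathbf{k}\mathbf{F}[I]$ the vector space with basis $\mathbf{F}[I]$, with $\Box,\Delta$ extended linearly ($\Delta_{S,T}(x)=y\otimes z$ when $\Delta_{S,T}(x)=(y,z)$); this gives a vector space monoid $(\mathbf{k}\mathbf{F},\Box)$ and a vector space comonoid $(\mathbf{k}\mathbf{F},\Delta)$. The dual monoid $(\mathbf{k}\mathbf{F}^*,\Delta^* )$ has components $\mathbf{k}\mathbf{F}[I]^*$ and multiplication $\Delta^*_{S,T}(\varphi\otimes\psi)=(\varphi\otimes\psi)\circ\Delta_{S,T}$. The inverted basis is $\omega_x=\sum_{x\le y}\mu(x,y)\,y$, $\mu$ the Möbius function of $\mathbf{F}[I]$. An isomorphism of vector space monoids is a family of linear isomorphisms, natural in bijections, commuting with the multiplications. *)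

(* Defs.v *)
From HB Require Import structures.
From mathcomp Require Import all_boot all_order all_algebra.
Set Implicit Arguments. Unset Strict Implicit. Unset Printing Implicit Defensive.
Import GRing.Theory.
Local Open Scope ring_scope.

(* Finite sets are modelled as finite types; the disjoint union S ⊔ T is the
   sum type (S + T). *)
Definition sumf (A A' B B' : Type) (f : A -> A') (g : B -> B') (u : A + B)
  : A' + B' := match u with inl a => inl (f a) | inr b => inr (g b) end.

Definition sum_assocr (A B C : Type) (u : (A + B) + C) : A + (B + C) :=
  match u with
  | inl (inl a) => inl a
  | inl (inr b) => inr (inl b)
  | inr c => inr (inr c)
  end.

Definition void_suml (A : Type) (u : void + A) : A :=
  match u with inl v => match v with end | inr a => a end.
Definition void_sumr (A : Type) (u : A + void) : A :=
  match u with inl a => a | inr v => match v with end end.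

(* F[I] is a finite poset for every finite set I; F[f] is given for every map,
   but only its values on bijections are constrained (and used). *)
Record poset_species := PosetSpecies {
  sp_obj :> finType -> finType;
  sp_le : forall I : finType, rel (sp_obj I);
  sp_map : forall I J : finType, (I -> J) -> sp_obj I -> sp_obj J;
  sp_one : sp_obj void;
  sp_le_refl : forall I, reflexive (@sp_le I);
  sp_le_anti : forall I, antisymmetric (@sp_le I);
  sp_le_trans : forall I, transitive (@sp_le I);
  sp_empty : forall x : sp_obj void, x = sp_one;
  sp_map_id : forall (I : finType) (x : sp_obj I), sp_map (@id I) x = x;
  sp_map_comp : forall (I J K : finType) (f : I -> J) (g : J -> K),
      bijective f -> bijective g ->
      forall x, sp_map (g \o f) x = sp_map g (sp_map f x);
  sp_map_mono : forall (I J : finType) (f : I -> J), bijective f ->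
      forall x y, sp_le x y -> sp_le (sp_map f x) (sp_map f y)
}.

Arguments sp_le {p I}.
Arguments sp_map {p I J}.
Arguments sp_one {p}.

Record poset_monoid (F : poset_species) := PosetMonoid {
  pm_mul : forall S T : finType, F S -> F T -> F (S + T)%type;
  pm_mono : forall (S T : finType) (x x' : F S) (y y' : F T),
      sp_le x x' -> sp_le y y' -> sp_le (pm_mul x y) (pm_mul x' y');
  pm_nat : forall (S S' T T' : finType) (f : S -> S') (g : T -> T'),
      bijective f -> bijective g -> forall (x : F S) (y : F T),
      sp_map (sumf f g) (pm_mul x y) = pm_mul (sp_map f x) (sp_map g y);
  pm_assoc : forall (S T U : finType) (x : F S) (y : F T) (z : F U),
      sp_map (@sum_assocr S T U) (pm_mul (pm_mul x y) z)
      = pm_mul x (pm_mul y z);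
  pm_unitl : forall (S : finType) (x : F S),
      sp_map (@void_suml S) (pm_mul sp_one x) = x;
  pm_unitr : forall (S : finType) (x : F S),
      sp_map (@void_sumr S) (pm_mul x sp_one) = x
}.

Record poset_comonoid (F : poset_species) := PosetComonoid {
  pc_co : forall S T : finType, F (S + T)%type -> F S * F T;
  pc_mono : forall (S T : finType) (x x' : F (S + T)%type),
      sp_le x x' -> sp_le (pc_co x).1 (pc_co x').1 && sp_le (pc_co x).2 (pc_co x').2;
  pc_nat : forall (S S' T T' : finType) (f : S -> S') (g : T -> T'),
      bijective f -> bijective g -> forall x : F (S + T)%type,
      pc_co (sp_map (sumf f g) x) = (sp_map f (pc_co x).1, sp_map g (pc_co x).2);
  pc_coassoc : forall (S T U : finType) (x : F ((S + T) + U)%type),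
      let y := sp_map (@sum_assocr S T U) x in
      [/\ (pc_co (pc_co x).1).1 = (pc_co y).1,
          (pc_co (pc_co x).1).2 = (pc_co (pc_co y).2).1 &
          (pc_co x).2 = (pc_co (pc_co y).2).2];
  pc_counitr : forall (S : finType) (x : F (S + void)%type),
      pc_co x = (sp_map (@void_sumr S) x, sp_one);
  pc_counitl : forall (S : finType) (x : F (void + S)%type),
      pc_co x = (sp_one, sp_map (@void_suml S) x)
}.

Definition adjoint (F : poset_species) (D : poset_comonoid F) (B : poset_monoid F)
  : Prop :=
  forall (S T : finType) (x : F (S + T)%type) (y : F S) (z : F T),
    (sp_le (pc_co D x).1 y && sp_le (pc_co D x).2 z) = sp_le x (pm_mul B y z).

Section Linearization.
Variables (k : fieldType) (F : poset_species).

(* kF[I]: the k-vector space with basis F[I] (finite), as coordinate vectors *)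
Local Notation kF I := {ffun sp_obj F I -> k}.

Definition bvec (I : finType) (x : F I) : kF I := [ffun y => (y == x)%:R].

Definition kmap (I J : finType) (f : I -> J) (a : kF I) : kF J :=
  [ffun y => \sum_(x : F I | sp_map f x == y) a x].

Definition kmul (B : poset_monoid F) (S T : finType) (a : kF S) (b : kF T)
  : kF (S + T)%type :=
  [ffun w => \sum_(x : F S) \sum_(y : F T | pm_mul B x y == w) a x * b y].

(* kF[I]^*: a linear functional φ on kF[I] is represented by its values on
   the basis F[I]; evaluation on a vector is by linear extension. *)
Local Notation kFdual I := {ffun sp_obj F I -> k}.
Definition dev (I : finType) (phi : kFdual I) (v : kF I) : k :=
  \sum_(y : F I) phi y * v y.

(* dual multiplication Δ^*(φ ⊗ ψ) = (φ ⊗ ψ) ∘ Δ, evaluated on the basis *)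
Definition dmul (D : poset_comonoid F) (S T : finType) (phi : kFdual S)
  (psi : kFdual T) : kFdual (S + T)%type :=
  [ffun x => phi (pc_co D x).1 * psi (pc_co D x).2].

(* Möbius function of the finite poset F[I], by its recursive definition
   μ(x,x) = 1, μ(x,y) = - Σ_{x ≤ z < y} μ(x,z) for x < y, μ(x,y) = 0 otherwise;
   the recursion depth is bounded by #|F[I]|, used as fuel. *)
Fixpoint mob_rec (I : finType) (n : nat) (x y : F I) : k :=
  match n with
  | 0 => 0
  | n'.+1 =>
      if x == y then 1
      else if sp_le x y then
        - \sum_(z : F I | sp_le x z && (z != y) && sp_le z y) mob_rec n' x z
      else 0
  end.
Definition mobius (I : finType) (x y : F I) : k := mob_rec #|F I| x y.

Definition omega (I : finType) (x : F I) : kF I :=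
  [ffun y => if sp_le x y then mobius x y else 0].

End Linearization.

Notation kF k F I := {ffun sp_obj F I -> GRing.Field.sort k} (only parsing).
Notation kFdual k F I := {ffun sp_obj F I -> GRing.Field.sort k} (only parsing).

(* Main.v *)
Require Import Defs.
From HB Require Import structures.
From mathcomp Require Import all_boot all_order all_algebra.
From Stdlib Require Import FunctionalExtensionality.
Set Implicit Arguments. Unset Strict Implicit. Unset Printing Implicit Defensive.
Import GRing.Theory.
Local Open Scope ring_scope.

Section Mob.
Variables (k : fieldType) (F : poset_species) (I : finType).
Implicit Types x y z w : F I.

Definition cnt x y := #|[pred z : F I | sp_le x z && sp_le z y]|.

Lemma cnt_lt x z y : sp_le x z -> sp_le z y -> z != y -> (cnt x z < cnt x y)%N.
Proof.
move=> hxz hzy nzy; apply: proper_card; apply/properP; split.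
  apply/subsetP => w; rewrite !inE => /andP[-> hwz] /=.
  exact: sp_le_trans hwz hzy.
exists y; rewrite !inE ?(sp_le_trans hxz hzy) ?sp_le_refl //=.
apply/negP => hyz; move/negP: nzy; apply.
by rewrite (@sp_le_anti F I z y) // hzy hyz.
Qed.

Lemma mob_fuel n x y : (cnt x y <= n)%N -> mob_rec k n x y = mob_rec k n.+1 x y.
Proof.
elim: n y => [|n IH] y hc.
  have hxy : ~~ sp_le x y.
    apply/negP => hxy; move: hc; rewrite leqn0 => /eqP/card0_eq/(_ y).
    by rewrite !inE hxy sp_le_refl.
  rewrite /=; case: eqP => [exy|]; last by rewrite (negbTE hxy).
  by rewrite exy sp_le_refl in hxy.
rewrite [LHS]/= [RHS]/=.
case: eqP => // _; case: ifP => // hxy; congr (- _).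
apply: eq_bigr => z /andP[/andP[hxz nzy] hzy]; apply: IH.
by rewrite -ltnS (leq_trans (cnt_lt hxz hzy nzy)).
Qed.

Lemma mob_id x w :
  \sum_(y | sp_le x y && sp_le y w) mobius k x y = (x == w)%:R.
Proof.
have hN : (0 < #|F I|)%N by apply/card_gt0P; exists x.
case: (x =P w) => [<-|/eqP nxw].
  rewrite (big_pred1 x); last first.
    move=> y /=; apply/idP/eqP => [/andP[h1 h2]|->]; last by rewrite sp_le_refl.
    by apply: (@sp_le_anti F I); rewrite h1 h2.
  by rewrite /mobius; case: #|F I| hN => //= N _; rewrite eqxx.
case hxw: (sp_le x w); last first.
  rewrite big_pred0 // => y; apply/negP => /andP[h1 h2].
  by rewrite (sp_le_trans h1 h2) in hxw.
rewrite (bigD1 w) /=; last by rewrite hxw sp_le_refl.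
have hc : (cnt x w <= #|F I|)%N by apply: max_card.
have [N eN] : exists N, #|F I| = N.+1 by exists #|F I|.-1; rewrite prednK.
rewrite {1}/mobius eN /= (negbTE nxw) hxw.
rewrite -[X in - X + _]/(\sum_(z | sp_le x z && (z != w) && sp_le z w) mob_rec k N x z).
set S := (X in - X + _).
suff -> : S = \sum_(i | sp_le x i && sp_le i w && (i != w)) mobius k x i.
  by rewrite addNr.
rewrite /S; apply: eq_big => [z|z /andP[/andP[hxz nzw] hzw]].
  by rewrite -!andbA; congr (_ && _); rewrite andbC.
rewrite /mobius eN; apply: mob_fuel.
by rewrite -ltnS -eN (leq_trans (cnt_lt hxz hzw nzw)).
Qed.

Lemma sum_enum (G : F I -> k) :
  \sum_(l < #|F I|) G (enum_val l) = \sum_y G y.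
Proof.
by symmetry; rewrite (reindex (@enum_val (F I) (mem (F I)))) //; exact: onW_bij (enum_val_bij _).
Qed.

Lemma mob_id2 z y :
  \sum_(x | sp_le z x && sp_le x y) mobius k x y = (z == y)%:R.
Proof.
pose e := (@enum_val (F I) (mem (F I))).
pose Zm : 'M[k]_#|F I| := \matrix_(i, j) (sp_le (e i) (e j))%:R.
pose Mm : 'M[k]_#|F I| :=
  \matrix_(i, j) (if sp_le (e i) (e j) then mobius k (e i) (e j) else 0).
have h1 : Mm *m Zm = 1%:M.
  apply/matrixP => i j; rewrite !mxE.
  rewrite (eq_bigr (fun l => (if sp_le (e i) (e l) then mobius k (e i) (e l) else 0) * (sp_le (e l) (e j))%:R)); last by move=> l _; rewrite !mxE.
  rewrite (sum_enum (fun y => (if sp_le (e i) y then mobius k (e i) y else 0) * (sp_le y (e j))%:R)).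
  have -> : (i == j) = (e i == e j) by apply/eqP/eqP => [->|/enum_val_inj].
  rewrite -mob_id [RHS]big_mkcond /=; apply: eq_bigr => w _.
  by case: (sp_le (e i) w); case: (sp_le w (e j)); rewrite /= ?mulr1 ?mulr0 ?mul0r.
have := mulmx1C h1 => /matrixP /(_ (enum_rank z) (enum_rank y)).
rewrite !mxE.
rewrite (eq_bigr (fun l => (sp_le (e (enum_rank z)) (e l))%:R * (if sp_le (e l) (e (enum_rank y)) then mobius k (e l) (e (enum_rank y)) else 0))); last by move=> l _; rewrite !mxE.
rewrite (sum_enum (fun w => (sp_le (e (enum_rank z)) w)%:R * (if sp_le w (e (enum_rank y)) then mobius k w (e (enum_rank y)) else 0))).
rewrite /e !enum_rankK.
have -> : (enum_rank z == enum_rank y) = (z == y) by apply/eqP/eqP => [/enum_rank_inj|->].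
move=> <-.
rewrite [LHS]big_mkcond /=; apply: eq_bigr => w _.
by case: (sp_le z w); case: (sp_le w y); rewrite /= ?mul1r ?mulr0 ?mul0r.
Qed.
End Mob.

Section Helpers.
Variable k : fieldType.

Lemma swap_sum (A B : finType) (P : pred A) (Q : A -> B -> bool) (G : A -> B -> k) :
  \sum_(y | P y) \sum_(w | Q y w) G y w = \sum_w \sum_(y | P y && Q y w) G y w.
Proof.
transitivity (\sum_y \sum_w (if P y && Q y w then G y w else 0)).
  rewrite big_mkcond; apply: eq_bigr => y _; case: (P y) => /=.
    by rewrite big_mkcond.
  by rewrite big1.
by rewrite exchange_big; apply: eq_bigr => w _; rewrite [RHS]big_mkcond.
Qed.

Lemma sum_ite1 (A : finType) (P : pred A) (v : A) (c : k) :
  \sum_(u | P u) (if v == u then c else 0) = if P v then c else 0.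
Proof.
rewrite -big_mkcondr; case hv: (P v).
  rewrite (big_pred1 v) // => u /=; apply/andP/eqP => [[_ /eqP <-]|->] //.
rewrite big_pred0 // => u; apply/negP => /andP[hu /eqP e].
by rewrite e hu in hv.
Qed.
End Helpers.

Definition Phi (k : fieldType) (F : poset_species) (I : finType)
  (a : {ffun F I -> k}) : {ffun F I -> k} := [ffun z => \sum_(x | sp_le z x) a x].
Definition Minv (k : fieldType) (F : poset_species) (I : finType)
  (b : {ffun F I -> k}) : {ffun F I -> k} :=
  [ffun x => \sum_(y | sp_le x y) mobius k x y * b y].

Lemma map_le_iff (F : poset_species) (I J : finType) (f : I -> J) :
  bijective f -> forall x v : F I, sp_le (sp_map f x) (sp_map f v) = sp_le x v.
Proof.
move=> bf x v; apply/idP/idP; last exact: sp_map_mono.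
move=> h; case: (bf) => g fg gf.
have gb : bijective g by exists f.
have e : g \o f = @id I by apply: functional_extensionality => y; exact: fg.
have := sp_map_mono gb h; rewrite -!(sp_map_comp bf gb) e !sp_map_id //.
Qed.

Theorem mainTheorem3 (k : fieldType) (k_char0 : [pchar k] =i pred0)
    (F : poset_species) (D : poset_comonoid F) (B : poset_monoid F)
    (adj : adjoint D B) :
  exists Phi : forall I : finType, kF k F I -> kFdual k F I,
    [/\ (* each component is a linear isomorphism *)
        (forall (I : finType) (c : k) (u v : kF k F I),
            Phi I [ffun y => c * u y + v y]
            = [ffun y => c * Phi I u y + Phi I v y]),
        (forall I : finType, bijective (Phi I)),
        (* natural in bijections *)
        (forall (I J : finType) (f : I -> J), bijective f ->
           forall (a : kF k F I) (x : F I),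
             Phi J (kmap f a) (sp_map f x) = Phi I a x),
        (* commutes with the multiplications □ and Δ^* *)
        (forall (S T : finType) (a : kF k F S) (b : kF k F T),
            Phi (S + T)%type (kmul B a b) = dmul D (Phi S a) (Phi T b)) &
        (* sends x to ω_x^*, the dual basis element to the inverted basis *)
        (forall (I : finType) (x y : F I),
            dev (Phi I (bvec k x)) (omega k y) = (x == y)%:R)].
Proof.
Proof.
exists (@Phi k F); split.
- move=> I c u v; apply/ffunP => z; rewrite !ffunE.
  under eq_bigr do rewrite ffunE.
  by rewrite big_split /= mulr_sumr.
- move=> I; exists (@Minv k F I).
  + move=> a; apply/ffunP => x; rewrite ffunE.
    under eq_bigr do rewrite ffunE mulr_sumr.
    rewrite swap_sum.
    under eq_bigr do rewrite -mulr_suml mob_id.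
    rewrite (bigD1 x) //= eqxx mul1r big1 ?addr0 // => w nwx.
    by rewrite eq_sym (negbTE nwx) mul0r.
  + move=> b; apply/ffunP => z; rewrite ffunE.
    under eq_bigr do rewrite ffunE.
    rewrite swap_sum.
    under eq_bigr do rewrite -mulr_suml mob_id2.
    rewrite (bigD1 z) //= eqxx mul1r big1 ?addr0 // => w nwz.
    by rewrite eq_sym (negbTE nwz) mul0r.
- move=> I J f bf a x; rewrite !ffunE.
  under eq_bigr do rewrite ffunE big_mkcond.
  rewrite exchange_big /=.
  under eq_bigr do rewrite sum_ite1 map_le_iff //.
  by rewrite [RHS]big_mkcond.
- move=> S T a b; apply/ffunP => w; rewrite !ffunE.
  under eq_bigr do rewrite ffunE.
  under eq_bigr do under eq_bigr do rewrite big_mkcond.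
  rewrite exchange_big /=.
  under eq_bigr do rewrite exchange_big /=.
  under eq_bigr do under eq_bigr do rewrite sum_ite1.
  rewrite big_distrlr [RHS]big_mkcond /=; apply: eq_bigr => x _.
  case h1 : (sp_le (pc_co D w).1 x).
    rewrite [RHS]big_mkcond; apply: eq_bigr => y _.
    by rewrite -adj h1.
  by rewrite big1 // => y _; rewrite -adj h1.
- move=> I x y; rewrite /dev.
  transitivity (\sum_(z | sp_le y z && sp_le z x) mobius k y z); last first.
    by rewrite mob_id eq_sym.
  rewrite [RHS]big_mkcond; apply: eq_bigr => z _.
  rewrite !ffunE.
  rewrite (eq_bigr (fun v => if x == v then 1 else 0)); last first.
    by move=> v _; rewrite ffunE eq_sym; case: eqP.
  rewrite sum_ite1.
  by case: (sp_le z x); case: (sp_le y z); rewrite /= ?mul1r ?mul0r ?andbF.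
Qed.
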